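(* Let $n\ge1$ be an integer, $\delta\in(0,1)$, and $\lambda=\frac{9n}{8\ln\frac{2}{\delta}}$. For $z\in[0,1]$ define \[ U(z)=z+\frac34\,\frac{1-2z+\sqrt{1+4\lambda z(1-z)}}{1+\lambda},\qquad L(z)=z+\frac34\,\frac{1-2z-\sqrt{1+4\lambda z(1-z)}}{1+\lambda}. \] Then $L(z)$ is monotonically increasing with respect to $z$ on the set of $z\in[0,1]$ such that $L(z)>0$. Similarly, $U(z)$ is monotonically increasing with respect to $z$ on the set of $z\in[0,1]$ such that $U(z)<1$. *)

(* Defs.v *)
From Stdlib Require Import Reals.
Open Scope R_scope.

Definition lam (n : nat) (delta : R) : R := 9 * INR n / (8 * ln (2 / delta)).

Definition Ufun (n : nat) (delta z : R) : R :=
  z + 3/4 * ((1 - 2*z + sqrt (1 + 4 * lam n delta * z * (1 - z))) / (1 + lam n delta)).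

Definition Lfun (n : nat) (delta z : R) : R :=
  z + 3/4 * ((1 - 2*z - sqrt (1 + 4 * lam n delta * z * (1 - z))) / (1 + lam n delta)).

(* Main.v *)
Require Import Defs.
From Stdlib Require Import Reals Lra Psatz.
Open Scope R_scope.

Definition Sg (l z : R) := sqrt (1 + 4 * l * z * (1 - z)).
Definition Lg (l c z : R) := z + c * (1 - 2*z - Sg l z).

Lemma sq_conc p q a b : 0 <= p -> 0 <= q -> 0 <= a -> 0 <= b ->
  p * sqrt a + q * sqrt b <= sqrt ((p+q)*(p*a+q*b)).
Proof.
  intros Hp Hq Ha Hb.
  assert (Hsa := sqrt_pos a). assert (Hsb := sqrt_pos b).
  assert (Ea := sqrt_sqrt a Ha). assert (Eb := sqrt_sqrt b Hb).
  assert (H0 : 0 <= p * sqrt a + q * sqrt b) by nra.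
  rewrite <- (sqrt_square _ H0). apply sqrt_le_1_alt.
  assert (0 <= p*q*((sqrt a - sqrt b)*(sqrt a - sqrt b))).
  { apply Rmult_le_pos; [apply Rmult_le_pos; lra|apply Rle_0_sqr]. }
  revert Ea Eb H. generalize (sqrt a) (sqrt b). intros x y Ea Eb H.
  rewrite <- Ea, <- Eb. nra.
Qed.

Lemma key l z1 z2 : 0 <= l -> 0 <= z1 -> z1 <= z2 -> z2 <= 1 ->
  z1 * Sg l z2 + (z2 - z1) <= z2 * Sg l z1.
Proof.
  intros Hl H1 H12 H2. unfold Sg.
  assert (HA2 : 0 <= 1 + 4 * l * z2 * (1 - z2)).
  { assert (0 <= l * (z2 * (1 - z2))) by (apply Rmult_le_pos; nra). nra. }
  assert (HA1 : 0 <= 1 + 4 * l * z1 * (1 - z1)).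
  { assert (0 <= l * (z1 * (1 - z1))) by (apply Rmult_le_pos; nra). nra. }
  pose proof (sq_conc z1 (z2 - z1) _ 1 H1 ltac:(lra) HA2 ltac:(lra)) as H.
  rewrite sqrt_1 in H.
  rewrite Rmult_1_r in H. eapply Rle_trans; [exact H|]. clear H.
  assert (E : z2 * sqrt (1 + 4 * l * z1 * (1 - z1)) = sqrt (z2 * (z2 * (1 + 4 * l * z1 * (1 - z1))))).
  { rewrite (sqrt_mult z2) by nra. rewrite sqrt_mult by lra.
    rewrite <- Rmult_assoc, sqrt_sqrt by lra. reflexivity. }
  rewrite E. apply sqrt_le_1_alt.
  replace ((z1 + (z2 - z1)) * (z1 * (1 + 4 * l * z2 * (1 - z2)) + (z2 - z1)))
    with (z2 * (z1 * (1 + 4 * l * z2 * (1 - z2)) + (z2 - z1))) by ring.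
  apply Rmult_le_compat_l; [lra|].
  assert (0 <= l * (z1 * (z2 * (z2 - z1)))).
  { apply Rmult_le_pos; [lra|]. apply Rmult_le_pos; [lra|]. apply Rmult_le_pos; lra. }
  nra.
Qed.

Lemma Lmono l c z1 z2 : 0 <= l -> 0 <= c -> 0 <= z1 -> z1 <= z2 -> z2 <= 1 ->
  0 < Lg l c z2 -> Lg l c z1 <= Lg l c z2.
Proof.
  intros Hl Hc H1 H12 H2 HL.
  assert (Hz2 : 0 < z2).
  { destruct (Req_dec z2 0) as [E|E]; [|lra].
    subst. unfold Lg, Sg in HL.
    replace (1 + 4 * l * 0 * (1 - 0)) with 1 in HL by ring.
    rewrite sqrt_1 in HL. lra. }
  pose proof (key l z1 z2 Hl H1 H12 H2) as K.
  assert (Hm : z2 * Lg l c z1 <= z1 * Lg l c z2).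
  { unfold Lg. assert (0 <= c * (z2 * Sg l z1 - (z1 * Sg l z2 + (z2 - z1))))
      by (apply Rmult_le_pos; lra). nra. }
  assert (z1 * Lg l c z2 <= z2 * Lg l c z2) by nra.
  nra.
Qed.

Theorem lemma2 (n : nat) (delta : R) :
  (1 <= n)%nat -> 0 < delta < 1 ->
  (forall z1 z2 : R,
     0 <= z1 <= 1 -> 0 <= z2 <= 1 ->
     0 < Lfun n delta z1 -> 0 < Lfun n delta z2 ->
     z1 <= z2 -> Lfun n delta z1 <= Lfun n delta z2) /\
  (forall z1 z2 : R,
     0 <= z1 <= 1 -> 0 <= z2 <= 1 ->
     Ufun n delta z1 < 1 -> Ufun n delta z2 < 1 ->
     z1 <= z2 -> Ufun n delta z1 <= Ufun n delta z2).
Proof.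
  intros Hn Hd.
  assert (Hl : 0 <= lam n delta).
  { unfold lam. apply Rmult_le_pos.
    - assert (0 <= INR n) by apply pos_INR. lra.
    - apply Rlt_le, Rinv_0_lt_compat.
      assert (0 < ln (2/delta)).
      { rewrite <- ln_1. apply ln_increasing; [lra|].
        apply (Rmult_lt_reg_r delta); [lra|]. unfold Rdiv.
        rewrite Rmult_assoc, Rinv_l by lra. lra. }
      lra. }
  set (l := lam n delta) in *.
  set (c := 3/4 / (1 + l)).
  assert (Hc : 0 <= c).
  { unfold c. apply Rlt_le. apply Rdiv_lt_0_compat; lra. }
  assert (EL : forall z, Lfun n delta z = Lg l c z).
  { intro z. unfold Lfun, Lg, Sg, c. fold l. field. lra. }
  assert (EU : forall z, Ufun n delta z = 1 - Lg l c (1 - z)).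
  { intro z. unfold Ufun, Lg, Sg, c. fold l.
    replace (1 + 4 * l * (1 - z) * (1 - (1 - z))) with (1 + 4 * l * z * (1 - z)) by ring.
    field. lra. }
  split.
  - intros z1 z2 H1 H2 _ HL H12. rewrite !EL in *.
    apply Lmono; lra.
  - intros z1 z2 H1 H2 HU _ H12. rewrite !EU in *.
    assert (Lg l c (1 - z2) <= Lg l c (1 - z1)) by (apply Lmono; lra).
    lra.
Qed.
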